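(* Let $\widetilde{\Sigma}_1,\widetilde{\Sigma}_2$ be disjoint visibly pushdown alphabets, $\widetilde{\Sigma}=\widetilde{\Sigma}_1\uplus\widetilde{\Sigma}_2$, and $P_1\subseteq\widetilde{\Sigma}_1^*$, $P_2\subseteq\widetilde{\Sigma}_2^*$ well-matched visibly pushdown languages. If $\prec$ is a visibly pushdown contextual order on $\widetilde{\Sigma}$ and $\mathrm{red}_\prec(P_1\parallel P_2)\subseteq\mathsf{wn}(P_1\parallel P_2)$, then $\mathrm{red}_\prec(P_1\parallel P_2)$ is a visibly pushdown language.
   Context: A visibly pushdown (VP) alphabet is a finite alphabet partitioned into calls, returns and internals; $\widetilde{\Sigma}$ has as calls/returns/internals the unions of those of $\widetilde{\Sigma}_1,\widetilde{\Sigma}_2$. Calls and returns in a word are matched like opening and closing parentheses (internals ignored); unmatched ones are pending; a word is well-matched if none are pending. A visibly pushdown automaton (VPA) is a pushdown automaton with bottom symbol $\bot$ that pushes one non-$\bot$ symbol on each call, pops the top symbol on each return (reading $\bot$ on empty stack without removing it) and leaves the stack unchanged on internals; a visibly pushdown language is one accepted by a VPA. Shuffle: $P_1\parallel P_2=\{w\in\widetilde{\Sigma}^*:\Pi_{\widetilde{\Sigma}_i}(w)\in P_i\}$ where $\Pi_{\widetilde{\Sigma}_i}$ erases letters outside $\widetilde{\Sigma}_i$. A word is well-nested if every matched call–return pair consists of two letters from the same $\widetilde{\Sigma}_k$; $\mathsf{wn}(L)$ is the set of well-nested words of $L$. $\mathbb{I}=\{(a,b):a\in\widetilde{\Sigma}_i,b\in\widetilde{\Sigma}_j,i\ne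 j\}$, $\equiv_{\mathbb{I}}$ the least reflexive transitive relation with $uabv\equiv_{\mathbb{I}}ubav$ for $(a,b)\in\mathbb{I}$. A contextual order is a map $\prec$ from $\widetilde{\Sigma}^*$ to strict total orders on $\widetilde{\Sigma}$; it induces $\preceq$ on words: $\sigma\preceq\rho$ iff $\sigma$ is a prefix of $\rho$ or $\sigma=\alpha a\beta$, $\rho=\alpha b\gamma$ with $a\prec_\alpha b$. $\mathrm{red}_\prec(L)=\{w\in L:\forall u\in L,(u\equiv_{\mathbb{I}}w\wedge u\preceq w)\Rightarrow u=w\}$. A contextual order is visibly pushdown if there is a complete deterministic VPA $A$ over $\widetilde{\Sigma}$ and a map $\mathsf{ord}$ from its states to strict total orders on $\widetilde{\Sigma}$ with $\prec_w=\mathsf{ord}(q)$, $q$ the state reached by $A$ after reading $w$, for every $w$. *)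

(* Defs.v *)
From Stdlib Require Import Relations.
From mathcomp Require Import all_boot.
Set Implicit Arguments. Unset Strict Implicit. Unset Printing Implicit Defensive.

Inductive vkind := VCall | VRet | VInt.

(* A VP alphabet is a finType [S] with a map [kind : S -> vkind]
   (the partition into calls / returns / internals).
   The disjoint union of two VP alphabets is the sum type. *)
Definition sumkind (S1 S2 : Type) (k1 : S1 -> vkind) (k2 : S2 -> vkind)
  (x : S1 + S2) : vkind :=
  match x with inl a => k1 a | inr b => k2 b end.

Definition lang (S : Type) := seq S -> Prop.

Fixpoint scan (S : Type) (kind : S -> vkind) (stk : seq S) (w : seq S)
  : seq (S * S) * seq S * seq S :=
  match w with
  | [::] => ([::], [::], stk)
  | a :: w' =>
    match kind a with
    | VCall => scan kind (a :: stk) w'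
    | VInt => scan kind stk w'
    | VRet =>
      match stk with
      | [::] => let: (ps, pr, pc) := scan kind [::] w' in (ps, a :: pr, pc)
      | c :: stk' => let: (ps, pr, pc) := scan kind stk' w' in ((c, a) :: ps, pr, pc)
      end
    end
  end.

Definition matched_pairs S kind (w : seq S) := (scan kind [::] w).1.1.
Definition pending_rets S kind (w : seq S) := (scan kind [::] w).1.2.
Definition pending_calls S kind (w : seq S) := (scan kind [::] w).2.

Definition well_matched S (kind : S -> vkind) (w : seq S) : Prop :=
  pending_calls kind w = [::] /\ pending_rets kind w = [::].

Definition wm_lang S (kind : S -> vkind) (L : lang S) : Prop :=
  forall w, L w -> well_matched kind w.

(** * Visibly pushdown automata (nondeterministic, acceptance by final state);
    [None] plays the role of the bottom symbol. *)
Record vpa (S Q G : Type) := VPA {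
  v_init  : Q -> bool;
  v_final : Q -> bool;
  v_call  : Q -> S -> Q -> G -> bool;
  v_ret   : Q -> S -> option G -> Q -> bool;
  v_int   : Q -> S -> Q -> bool }.

Definition vstep S Q G (kind : S -> vkind) (A : vpa S Q G)
  (q : Q) (st : seq G) (a : S) (q' : Q) (st' : seq G) : Prop :=
  match kind a with
  | VCall => exists g, v_call A q a q' g /\ st' = g :: st
  | VInt => v_int A q a q' /\ st' = st
  | VRet => match st with
            | [::] => v_ret A q a None q' /\ st' = [::]
            | g :: s => v_ret A q a (Some g) q' /\ st' = s
            end
  end.

Fixpoint vrun S Q G (kind : S -> vkind) (A : vpa S Q G)
  (q : Q) (st : seq G) (w : seq S) (q' : Q) (st' : seq G) : Prop :=
  match w with
  | [::] => q = q' /\ st = st'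
  | a :: w' => exists q1 st1, vstep kind A q st a q1 st1 /\ vrun kind A q1 st1 w' q' st'
  end.

Definition vaccepts S Q G (kind : S -> vkind) (A : vpa S Q G) (w : seq S) : Prop :=
  exists q0 qf st, v_init A q0 /\ v_final A qf /\ vrun kind A q0 [::] w qf st.

Definition VPL (S : finType) (kind : S -> vkind) (L : lang S) : Prop :=
  exists (Q G : finType) (A : vpa S Q G), forall w, L w <-> vaccepts kind A w.

(** * Complete deterministic VPA (only the state reached matters here) *)
Record dvpa (S Q G : Type) := DVPA {
  d_init : Q;
  d_call : Q -> S -> Q * G;
  d_ret  : Q -> S -> option G -> Q;
  d_int  : Q -> S -> Q }.

Definition dstep S Q G (kind : S -> vkind) (A : dvpa S Q G)
  (c : Q * seq G) (a : S) : Q * seq G :=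
  let: (q, st) := c in
  match kind a with
  | VCall => let: (q', g) := d_call A q a in (q', g :: st)
  | VInt => (d_int A q a, st)
  | VRet => match st with
            | [::] => (d_ret A q a None, [::])
            | g :: s => (d_ret A q a (Some g), s)
            end
  end.

Definition dstate S Q G (kind : S -> vkind) (A : dvpa S Q G) (w : seq S) : Q :=
  (foldl (dstep kind A) (d_init A, [::]) w).1.

Definition strict_total (S : eqType) (r : rel S) : Prop :=
  (forall a, ~~ r a a) /\
  (forall a b c, r a b -> r b c -> r a c) /\
  (forall a b, a != b -> r a b || r b a).

Definition contextual_order (S : eqType) (prec : seq S -> rel S) : Prop :=
  forall w, strict_total (prec w).

Definition vp_contextual_order (S : finType) (kind : S -> vkind)
  (prec : seq S -> rel S) : Prop :=
  contextual_order prec /\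
  exists (Q G : finType) (A : dvpa S Q G) (ord : Q -> rel S),
    (forall q, strict_total (ord q)) /\
    (forall w, prec w = ord (dstate kind A w)).

Definition word_le (S : eqType) (prec : seq S -> rel S) (s r : seq S) : Prop :=
  prefix s r \/
  exists al a be b ga, s = al ++ a :: be /\ r = al ++ b :: ga /\ prec al a b.

Definition proj1s (S1 S2 : Type) (w : seq (S1 + S2)) : seq S1 :=
  pmap (fun x => match x with inl a => Some a | inr _ => None end) w.
Definition proj2s (S1 S2 : Type) (w : seq (S1 + S2)) : seq S2 :=
  pmap (fun x => match x with inl _ => None | inr b => Some b end) w.

Definition shuffle S1 S2 (P1 : lang S1) (P2 : lang S2) : lang (S1 + S2) :=
  fun w => P1 (proj1s w) /\ P2 (proj2s w).

Definition side (S1 S2 : Type) (x : S1 + S2) : bool :=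
  if x is inl _ then true else false.

Definition indep S1 S2 (a b : S1 + S2) : bool := side a != side b.

Definition swap1 S1 S2 (u v : seq (S1 + S2)) : Prop :=
  exists x y a b, indep a b /\ u = x ++ a :: b :: y /\ v = x ++ b :: a :: y.

Definition equivI S1 S2 : relation (seq (S1 + S2)) := clos_refl_trans _ (@swap1 S1 S2).

Definition well_nested (S1 S2 : eqType) (k1 : S1 -> vkind) (k2 : S2 -> vkind)
  (w : seq (S1 + S2)) : Prop :=
  forall c r, (c, r) \in matched_pairs (sumkind k1 k2) w -> side c = side r.


Definition wn (S1 S2 : eqType) k1 k2 (L : lang (S1 + S2)) : lang (S1 + S2) :=
  fun w => L w /\ @well_nested S1 S2 k1 k2 w.

Definition red (S1 S2 : eqType) (prec : seq (S1 + S2) -> rel (S1 + S2))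
  (L : lang (S1 + S2)) : lang (S1 + S2) :=
  fun w => L w /\ forall u, L u -> equivI u w -> word_le prec u w -> u = w.

(* Main.v *)
Require Import Defs.
From Stdlib Require Import Relations.
From mathcomp Require Import all_boot.
Set Implicit Arguments. Unset Strict Implicit. Unset Printing Implicit Defensive.

Lemma catlI (T : Type) (s t1 t2 : seq T) : s ++ t1 = s ++ t2 -> t1 = t2.
Proof. by elim: s => //= x s IH [] /IH. Qed.

Lemma rcons_split (T : Type) (w : seq T) x p a be :
  rcons w x = p ++ a :: be ->
  (be = [::] /\ a = x /\ w = p) \/ exists be', be = rcons be' x /\ w = p ++ a :: be'.
Proof.
case/lastP: be => [|be y].
  rewrite cats1 => /rcons_inj [-> ->]; by left.
rewrite -rcons_cons -rcons_cat => /rcons_inj [-> ->]; right; by exists be.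
Qed.

Lemma proj1s_cat (S1 S2 : Type) (s t : seq (S1 + S2)) :
  proj1s (s ++ t) = proj1s s ++ proj1s t.
Proof. exact: pmap_cat. Qed.
Lemma proj2s_cat (S1 S2 : Type) (s t : seq (S1 + S2)) :
  proj2s (s ++ t) = proj2s s ++ proj2s t.
Proof. exact: pmap_cat. Qed.

Lemma equivI_proj (S1 S2 : Type) (u w : seq (S1 + S2)) :
  equivI u w -> proj1s u = proj1s w /\ proj2s u = proj2s w.
Proof.
elim => [x y [x0 [y0 [a [b [Hab [-> ->]]]]]] | x | x y z _ [H1 H2] _ [H3 H4]].
- rewrite !proj1s_cat !proj2s_cat.
  by move: Hab; case: a => a; case: b => b //= _.
- by [].
- by rewrite H1 H3 H2 H4.
Qed.

Lemma size_proj (S1 S2 : Type) (w : seq (S1 + S2)) :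
  size w = size (proj1s w) + size (proj2s w).
Proof. elim: w => //= [[a|a] w ->] /=; by rewrite ?addnS. Qed.

Lemma proj1s_first (S1 S2 : Type) (s : seq (S1 + S2)) a t :
  proj1s s = a :: t -> exists v be, s = v ++ inl a :: be /\ all (fun y => side y == false) v.
Proof.
elim: s => //= [[x|x] s IH] /=.
  by case=> -> _; exists [::], s.
move/IH => [v [be [-> Hv]]]; by exists (inr x :: v), be.
Qed.

Lemma proj2s_first (S1 S2 : Type) (s : seq (S1 + S2)) a t :
  proj2s s = a :: t -> exists v be, s = v ++ inr a :: be /\ all (fun y => side y == true) v.
Proof.
elim: s => //= [[x|x] s IH] /=.
  move/IH => [v [be [-> Hv]]]; by exists (inl x :: v), be.
by case=> -> _; exists [::], s.
Qed.

Definition bad (S1 S2 : Type) (P : seq (S1 + S2) -> rel (S1 + S2)) (w : seq (S1 + S2)) :=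
  exists al b v a be, w = al ++ b :: v ++ a :: be /\ side a != side b /\
    all (fun y => side y == side b) v /\ P al a b.

Lemma move_left (S1 S2 : Type) (a : S1 + S2) y : forall x z,
  all (fun c => side c != side a) y ->
  equivI (x ++ a :: y ++ z) (x ++ y ++ a :: z).
Proof.
elim: y => [|c y IH] x z /=; first by move=> _; apply: rt_refl.
case/andP=> Hc Hy.
apply: rt_trans (_ : equivI (x ++ c :: a :: y ++ z) _).
  apply: rt_step; exists x, (y ++ z), a, c; split => //; by rewrite /indep eq_sym.
have := IH (rcons x c) z Hy; by rewrite !cat_rcons.
Qed.

Lemma red_notbad (S1 S2 : eqType) (prec : seq (S1 + S2) -> rel (S1 + S2)) P1 P2 w :
  red prec (shuffle P1 P2) w -> ~ bad prec w.
Proof.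
move=> [HL Hmin] [al [b [v [a [be [Hw [Hab [Hv Hp]]]]]]]].
set u := al ++ a :: (b :: v) ++ be.
have Hall : all (fun c => side c != side a) (b :: v).
  rewrite /= eq_sym Hab /=; apply/allP => y Hy.
  by move/allP: Hv => /(_ y Hy) /eqP ->; rewrite eq_sym.
have He : equivI u w by rewrite Hw; exact: move_left.
have [E1 E2] := equivI_proj He.
have HLu : shuffle P1 P2 u by move: HL; rewrite /shuffle E1 E2.
have Huw : u = w.
  apply: Hmin => //; right; exists al, a, (b :: v ++ be), b, (v ++ a :: be).
  by rewrite Hw.
move: Huw; rewrite Hw /u => /catlI [Eab].
by move: Hab; rewrite Eab eqxx.
Qed.

Lemma notbad_red (S1 S2 : eqType) (prec : seq (S1 + S2) -> rel (S1 + S2)) P1 P2 w :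
  (forall w a, ~~ prec w a a) ->
  shuffle P1 P2 w -> ~ bad prec w -> red prec (shuffle P1 P2) w.
Proof.
move=> Hirr HL Hnb; split => // u _ He [Hpre|[al [a [be [b [ga [Hu [Hw Hp]]]]]]]].
  have [E1 E2] := equivI_proj He.
  have Hs : size u = size w by rewrite !size_proj E1 E2.
  by move: Hpre; rewrite prefixE Hs take_size => /eqP.
exfalso; have [E1 E2] := equivI_proj He.
move: E1 E2; rewrite Hu Hw !proj1s_cat !proj2s_cat => /catlI E1 /catlI E2.
case: a Hu Hp E1 E2 => [a|a] Hu Hp /= E1 E2.
- have [v [be' [Hbg Hv]]] := proj1s_first (s := b :: ga) (esym E1).
  case: v Hbg Hv => [|c v] /=.
    by case=> Eb _; move: Hp; rewrite Eb (negbTE (Hirr _ _)).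
  case=> <- Hga /andP [Hb Hv]; apply: Hnb.
  exists al, b, v, (inl a), be'; rewrite Hw Hga; split => //; split.
    by rewrite (eqP Hb).
  split => //; apply/allP => y Hy; move/allP: Hv => /(_ y Hy) /eqP ->; by rewrite (eqP Hb).
- have [v [be' [Hbg Hv]]] := proj2s_first (s := b :: ga) (esym E2).
  case: v Hbg Hv => [|c v] /=.
    by case=> Eb _; move: Hp; rewrite Eb (negbTE (Hirr _ _)).
  case=> <- Hga /andP [Hb Hv]; apply: Hnb.
  exists al, b, v, (inr a), be'; rewrite Hw Hga; split => //; split.
    by rewrite (eqP Hb).
  split => //; apply/allP => y Hy; move/allP: Hv => /(_ y Hy) /eqP ->; by rewrite (eqP Hb).
Qed.

Definition prodD (S Q G : Type) (Qd Gd : eqType) (A : vpa S Q G) (D : dvpa S Qd Gd)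
  (acc : Qd -> bool) : vpa S (Q * Qd) (G * Gd) :=
 VPA (fun q => v_init A q.1 && (q.2 == d_init D))
     (fun q => v_final A q.1 && acc q.2)
     (fun q x q' g => v_call A q.1 x q'.1 g.1 && ((q'.2, g.2) == d_call D q.2 x))
     (fun q x o q' => v_ret A q.1 x (omap fst o) q'.1 && (q'.2 == d_ret D q.2 x (omap snd o)))
     (fun q x q' => v_int A q.1 x q'.1 && (q'.2 == d_int D q.2 x)).

Lemma prodD_sound (S Q G : Type) (Qd Gd : eqType) (A : vpa S Q G) (D : dvpa S Qd Gd) acc kind w :
  forall q st q' st', vrun kind (prodD A D acc) q st w q' st' ->
  vrun kind A q.1 (map fst st) w q'.1 (map fst st') /\
  foldl (dstep kind D) (q.2, map snd st) w = (q'.2, map snd st').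
Proof.
elim: w => [|a w IH] q st q' st' /=.
  by case=> -> ->.
move=> [q1 [st1 [Hs Hr]]].
move: Hs; rewrite /vstep /dstep; case E: (kind a).
- move=> [g [/andP [Hc /eqP Hd] Est]]; subst st1; have [IHa IHb] := IH _ _ _ _ Hr; split.
    exists q1.1, (g.1 :: map fst st); split => //; exists g.1; by split.
  by rewrite -Hd.
- case: st => [|g st] [/andP [Hr' /eqP Hd] Est]; subst st1; have [IHa IHb] := IH _ _ _ _ Hr; split.
  + by exists q1.1, [::]; split.
  + by rewrite /= -Hd in IHb *.
  + by exists q1.1, (map fst st); split.
  + by rewrite /= -Hd in IHb *.
- move=> [/andP [Hi /eqP Hd] Est]; subst st1; have [IHa IHb] := IH _ _ _ _ Hr; split.
    by exists q1.1, (map fst st); split.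
  by rewrite -Hd.
Qed.

Lemma prodD_complete (S Q G : Type) (Qd Gd : eqType) (A : vpa S Q G) (D : dvpa S Qd Gd) acc kind w :
  forall q qd st q' s', vrun kind A q (map fst st) w q' s' ->
  exists st', vrun kind (prodD A D acc) (q, qd) st w
                 (q', (foldl (dstep kind D) (qd, map snd st) w).1) st'.
Proof.
elim: w => [|a w IH] q qd st q' s' /=.
  by case=> -> _; exists st.
move=> [q1 [s1 [Hs Hr]]].
move: Hs; rewrite /vstep /dstep; case E: (kind a).
- move=> [g [Hc Es]]; subst s1; case Ed: (d_call D qd a) => [qd1 gd].
  have [st' Hst'] := IH q1 qd1 ((g, gd) :: st) q' s' Hr.
  exists st', (q1, qd1), ((g, gd) :: st); split => //.
  exists (g, gd); by rewrite /= Hc Ed eqxx.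
- case: st => [|[g gd] st] [Hc Es] /=; subst s1.
  + have [st' Hst'] := IH q1 (d_ret D qd a None) [::] q' s' Hr.
    exists st', (q1, d_ret D qd a None), [::]; by rewrite Hc eqxx.
  + have [st' Hst'] := IH q1 (d_ret D qd a (Some gd)) st q' s' Hr.
    exists st', (q1, d_ret D qd a (Some gd)), st; by rewrite Hc eqxx.
- move=> [Hc Es]; subst s1.
  have [st' Hst'] := IH q1 (d_int D qd a) st q' s' Hr.
  exists st', (q1, d_int D qd a), st; rewrite /= Hc eqxx; by split.
Qed.

Lemma vpl_filter (S : finType) kind (L : lang S) (Qd Gd : finType) (D : dvpa S Qd Gd)
  (acc : Qd -> bool) :
  VPL kind L -> VPL kind (fun w => L w /\ acc (dstate kind D w)).
Proof.
move=> [Q [G [A HA]]].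
exists (Q * Qd)%type, (G * Gd)%type, (prodD A D acc) => w; split.
  move=> [/HA [q0 [qf [st [Hi [Hf Hr]]]]] Hacc].
  have [st' Hst'] := prodD_complete D acc (st := [::]) (d_init D) Hr.
  exists (q0, d_init D), (qf, dstate kind D w), st'; by rewrite /= Hi Hf Hacc eqxx.
move=> [[q0 qd0] [[qf qdf] [st [/andP [Hi /eqP Hd] [/andP [Hf Hacc] Hr]]]]].
have [H1 H2] := prodD_sound Hr.
split; first by apply/HA; exists q0, qf, (map fst st).
by rewrite /dstate -Hd H2.
Qed.

Fixpoint wnf (S1 S2 : Type) (K : S1 + S2 -> vkind) (stk : seq (S1 + S2)) (w : seq (S1 + S2)) : Prop :=
  match w with
  | [::] => True
  | a :: w' =>
    match K a with
    | VCall => wnf K (a :: stk) w'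
    | VInt => wnf K stk w'
    | VRet => match stk with
              | [::] => wnf K [::] w'
              | c :: s => side c = side a /\ wnf K s w'
              end
    end
  end.

Lemma wnf_iff (S1 S2 : eqType) (K : S1 + S2 -> vkind) w : forall stk,
  wnf K stk w <-> forall c r, (c, r) \in (scan K stk w).1.1 -> side c = side r.
Proof.
elim: w => [|a w IH] stk /=; first by split.
case: (K a) => //.
case: stk => [|c s].
  case E: (scan K [::] w) => [[ps pr] pc] /=.
  by have := IH [::]; rewrite E.
case E: (scan K s w) => [[ps pr] pc] /=.
have [I1 I2] := IH s; rewrite E /= in I1 I2; split.
  move=> [Hc /I1 H] c' r'; rewrite in_cons => /orP [/eqP [-> ->] //|]; exact: H.
move=> H; split; first by apply: H; rewrite in_cons eqxx.
by apply: I2 => c' r' Hin; apply: H; rewrite in_cons Hin orbT.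
Qed.

Definition shufA (S1 S2 : Type) (Q1 Q2 : eqType) (G1 G2 : Type)
  (A1 : vpa S1 Q1 G1) (A2 : vpa S2 Q2 G2) : vpa (S1 + S2) (Q1 * Q2) (G1 + G2) :=
 VPA (fun q => v_init A1 q.1 && v_init A2 q.2)
     (fun q => v_final A1 q.1 && v_final A2 q.2)
     (fun q x q' g => match x, g with
        | inl a, inl g1 => v_call A1 q.1 a q'.1 g1 && (q'.2 == q.2)
        | inr b, inr g2 => v_call A2 q.2 b q'.2 g2 && (q'.1 == q.1)
        | _, _ => false end)
     (fun q x o q' => match x, o with
        | inl a, None => v_ret A1 q.1 a None q'.1 && (q'.2 == q.2)
        | inl a, Some (inl g) => v_ret A1 q.1 a (Some g) q'.1 && (q'.2 == q.2)
        | inr b, None => v_ret A2 q.2 b None q'.2 && (q'.1 == q.1)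
        | inr b, Some (inr g) => v_ret A2 q.2 b (Some g) q'.2 && (q'.1 == q.1)
        | _, _ => false end)
     (fun q x q' => match x with
        | inl a => v_int A1 q.1 a q'.1 && (q'.2 == q.2)
        | inr b => v_int A2 q.2 b q'.2 && (q'.1 == q.1) end).

Lemma shufA_sound (S1 S2 : Type) (Q1 Q2 : eqType) (G1 G2 : Type)
  (A1 : vpa S1 Q1 G1) (A2 : vpa S2 Q2 G2) k1 k2 w :
  forall q st q' st' stk, vrun (sumkind k1 k2) (shufA A1 A2) q st w q' st' ->
  map (fun g => side g) st = map (fun g => side g) stk ->
  vrun k1 A1 q.1 (proj1s st) (proj1s w) q'.1 (proj1s st') /\
  vrun k2 A2 q.2 (proj2s st) (proj2s w) q'.2 (proj2s st') /\
  wnf (sumkind k1 k2) stk w.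
Proof.
elim: w => [|a w IH] q st q' st' stk /=.
  by case=> -> ->.
move=> [q1 [st1 [Hs Hr]]] Hside.
case: a Hs => a; rewrite /vstep /=; case E: (_ a) => //.
- case=> [[g|g] [//= /andP [Hc /eqP H2] Est]]; subst st1.
  have [R1 [R2 W]] := IH _ _ _ _ (inl a :: stk) Hr ltac:(by rewrite /= Hside).
  split; last split.
  + exists q1.1, (g :: proj1s st); split => //; rewrite /vstep E; by exists g.
  + by rewrite -H2.
  + by [].
- case: st Hside => [|[g|g] st] Hside [Hc Est]; subst st1.
  + case: stk Hside => // _.
    have [R1 [R2 W]] := IH _ _ _ _ [::] Hr erefl.
    case/andP: Hc => Hc /eqP H2.
    split; last split => //; last by rewrite -H2.
    exists q1.1, [::]; split => //; by rewrite /vstep E.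
  + case: stk Hside => // c stk /= [Hgc Hside].
    have [R1 [R2 W]] := IH _ _ _ _ stk Hr Hside.
    case/andP: Hc => Hc /eqP H2.
    split; last split => //; last by rewrite -H2.
    exists q1.1, (proj1s st); split => //; by rewrite /vstep E.
  + by [].
- case=> [/andP [Hc /eqP H2] Est]; subst st1.
  have [R1 [R2 W]] := IH _ _ _ _ stk Hr Hside.
  split; last split => //; last by rewrite -H2.
  exists q1.1, (proj1s st); split => //; by rewrite /vstep E.
- case=> [[g|g] [//= /andP [Hc /eqP H2] Est]]; subst st1.
  have [R1 [R2 W]] := IH _ _ _ _ (inr a :: stk) Hr ltac:(by rewrite /= Hside).
  split; last split.
  + by rewrite -H2.
  + exists q1.2, (g :: proj2s st); split => //; rewrite /vstep E; by exists g.
  + by [].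
- case: st Hside => [|[g|g] st] Hside [Hc Est]; subst st1.
  + case: stk Hside => // _.
    have [R1 [R2 W]] := IH _ _ _ _ [::] Hr erefl.
    case/andP: Hc => Hc /eqP H2.
    split; last split => //; first by rewrite -H2.
    exists q1.2, [::]; split => //; by rewrite /vstep E.
  + by [].
  + case: stk Hside => // c stk /= [Hgc Hside].
    have [R1 [R2 W]] := IH _ _ _ _ stk Hr Hside.
    case/andP: Hc => Hc /eqP H2.
    split; last split => //; first by rewrite -H2.
    exists q1.2, (proj2s st); split => //; by rewrite /vstep E.
- case=> [/andP [Hc /eqP H2] Est]; subst st1.
  have [R1 [R2 W]] := IH _ _ _ _ stk Hr Hside.
  split; last split => //; first by rewrite -H2.
  exists q1.2, (proj2s st); split => //; by rewrite /vstep E.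
Qed.

Lemma shufA_complete (S1 S2 : Type) (Q1 Q2 : eqType) (G1 G2 : Type)
  (A1 : vpa S1 Q1 G1) (A2 : vpa S2 Q2 G2) k1 k2 w :
  forall q1 q2 st q1' q2' s1' s2' stk,
  vrun k1 A1 q1 (proj1s st) (proj1s w) q1' s1' ->
  vrun k2 A2 q2 (proj2s st) (proj2s w) q2' s2' ->
  map (fun g => side g) st = map (fun g => side g) stk ->
  wnf (sumkind k1 k2) stk w ->
  exists st', vrun (sumkind k1 k2) (shufA A1 A2) (q1, q2) st w (q1', q2') st'.
Proof.
elim: w => [|a w IH] q1 q2 st q1' q2' s1' s2' stk /=.
  by move=> [-> _] [-> _]; exists st.
case: a => a /=.
- move=> [p1 [t1 [Hs R1]]] R2 Hside; move: Hs; rewrite /vstep; case E: (k1 a) => //.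
  + move=> [g [Hc Et]] W; subst t1.
    have [st' H] := IH p1 q2 (inl g :: st) q1' q2' s1' s2' (inl a :: stk) R1 R2
       ltac:(by rewrite /= Hside) W.
    exists st', (p1, q2), (inl g :: st); split => //; rewrite /vstep /= E.
    by exists (inl g); rewrite /= Hc eqxx.
  + case: st Hside R1 R2 => [|[g|g] st] Hside R1 R2.
    * case: stk Hside => // _ /= [Hc Et] W; subst t1.
      have [st' H] := IH p1 q2 [::] q1' q2' s1' s2' [::] R1 R2 erefl W.
      exists st', (p1, q2), [::]; by rewrite /vstep /= E /= Hc eqxx.
    * case: stk Hside => // c stk /= [Hgc Hside] [Hc Et] [Hcs W]; subst t1.
      have [st' H] := IH p1 q2 st q1' q2' s1' s2' stk R1 R2 Hside W.
      exists st', (p1, q2), st; by rewrite /vstep /= E /= Hc eqxx.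
    * case: stk Hside => // c stk /= [Hgc Hside] _ [Hcs W].
      by move: Hcs; rewrite -Hgc.
  + move=> [Hc Et] W; subst t1.
    have [st' H] := IH p1 q2 st q1' q2' s1' s2' stk R1 R2 Hside W.
    exists st', (p1, q2), st; rewrite /vstep /= E /= Hc eqxx; by split.
- move=> R1 [p2 [t2 [Hs R2]]] Hside; move: Hs; rewrite /vstep; case E: (k2 a) => //.
  + move=> [g [Hc Et]] W; subst t2.
    have [st' H] := IH q1 p2 (inr g :: st) q1' q2' s1' s2' (inr a :: stk) R1 R2
       ltac:(by rewrite /= Hside) W.
    exists st', (q1, p2), (inr g :: st); split => //; rewrite /vstep /= E.
    by exists (inr g); rewrite /= Hc eqxx.
  + case: st Hside R1 R2 => [|[g|g] st] Hside R1 R2.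
    * case: stk Hside => // _ /= [Hc Et] W; subst t2.
      have [st' H] := IH q1 p2 [::] q1' q2' s1' s2' [::] R1 R2 erefl W.
      exists st', (q1, p2), [::]; by rewrite /vstep /= E /= Hc eqxx.
    * case: stk Hside => // c stk /= [Hgc Hside] _ [Hcs W].
      by move: Hcs; rewrite -Hgc.
    * case: stk Hside => // c stk /= [Hgc Hside] [Hc Et] [Hcs W]; subst t2.
      have [st' H] := IH q1 p2 st q1' q2' s1' s2' stk R1 R2 Hside W.
      exists st', (q1, p2), st; by rewrite /vstep /= E /= Hc eqxx.
  + move=> [Hc Et] W; subst t2.
    have [st' H] := IH q1 p2 st q1' q2' s1' s2' stk R1 R2 Hside W.
    exists st', (q1, p2), st; rewrite /vstep /= E /= Hc eqxx; by split.
Qed.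

#[local] Arguments dstep : simpl never.

Definition upd (S1 S2 : finType) (Qd : Type) (ord : Qd -> rel (S1 + S2)) (q : Qd)
  (c : {set (S1 + S2)} * bool) (x : S1 + S2) : {set (S1 + S2)} * bool :=
  ([set y | (side y != side x) && ((y \in c.1) || ord q y x)], c.2 && (x \notin c.1)).

Definition ckD (S1 S2 : finType) (Qd Gd : Type) (D : dvpa (S1 + S2) Qd Gd)
  (ord : Qd -> rel (S1 + S2)) : dvpa (S1 + S2) (Qd * ({set (S1 + S2)} * bool)) Gd :=
  DVPA (d_init D, (set0, true))
   (fun c x => let: (q', g) := d_call D c.1 x in ((q', upd ord c.1 c.2 x), g))
   (fun c x o => (d_ret D c.1 x o, upd ord c.1 c.2 x))
   (fun c x => (d_int D c.1 x, upd ord c.1 c.2 x)).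

Lemma ck_step (S1 S2 : finType) (Qd Gd : Type) (D : dvpa (S1 + S2) Qd Gd) ord kind c st x :
  dstep kind (ckD D ord) (c, st) x =
  (((dstep kind D (c.1, st) x).1, upd ord c.1 c.2 x), (dstep kind D (c.1, st) x).2).
Proof.
rewrite /dstep /=; case: (kind x) => //=.
  by case: (d_call D c.1 x).
by case: st.
Qed.

Lemma ck_fold (S1 S2 : finType) (Qd Gd : Type) (D : dvpa (S1 + S2) Qd Gd) ord kind w : forall c st,
  ((foldl (dstep kind (ckD D ord)) (c, st) w).1.1, (foldl (dstep kind (ckD D ord)) (c, st) w).2)
  = foldl (dstep kind D) (c.1, st) w.
Proof.
elim: w => [|x w IH] c st /=; first by [].
rewrite ck_step IH /=; by case: (dstep _ _ _ _).
Qed.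

Lemma ck_rcons (S1 S2 : finType) (Qd Gd : Type) (D : dvpa (S1 + S2) Qd Gd) ord kind w x :
  (dstate kind (ckD D ord) (rcons w x)).2 =
  upd ord (dstate kind D w) (dstate kind (ckD D ord) w).2 x.
Proof.
rewrite /dstate -cats1 foldl_cat /=.
have := ck_fold D ord kind w (d_init (ckD D ord)) [::].
case: (foldl _ _ w) => [[q cc] st] /= E.
by rewrite ck_step /= -E.
Qed.

Definition inF (S1 S2 : Type) (P : seq (S1 + S2) -> rel (S1 + S2)) w y :=
  exists al c v, w = al ++ c :: v /\ side y != side c /\
    all (fun z => side z == side c) v /\ P al y c.

Lemma bad_rcons (S1 S2 : Type) (P : seq (S1 + S2) -> rel (S1 + S2)) w x :
  bad P (rcons w x) <-> bad P w \/ inF P w x.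
Proof.
split.
  move=> [al [b [v [a [be [E [Hab [Hv Hp]]]]]]]].
  have E' : rcons w x = (al ++ b :: v) ++ a :: be by rewrite E -catA.
  case: (rcons_split E') => [[_ [Ea Ew]] | [be' [_ Ew]]].
    right; exists al, b, v; by rewrite Ew -Ea.
  left; exists al, b, v, a, be'; by rewrite Ew -catA.
case=> [[al [b [v [a [be [E [Hab [Hv Hp]]]]]]]] | [al [c [v [E [Hs [Hv Hp]]]]]]].
  exists al, b, v, a, (rcons be x); by rewrite E !(rcons_cat, rcons_cons).
exists al, c, v, x, [::]; by rewrite E -cats1 -catA.
Qed.

Lemma ck_inv (S1 S2 : finType) (Qd Gd : Type) (D : dvpa (S1 + S2) Qd Gd) ord kind w :
  let P := fun al => ord (dstate kind D al) in
  let c := (dstate kind (ckD D ord) w).2 in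
  (forall y, y \in c.1 <-> inF P w y) /\ (c.2 <-> ~ bad P w).
Proof.
move=> P; elim/last_ind: w => [|w x [IH1 IH2]] /=.
  split.
    move=> y; rewrite in_set0; split => //.
    by move=> [al [c0 [v [E _]]]]; case: al E.
  split => // _ [al [b [v [a [be [E _]]]]]]; by case: al E.
rewrite ck_rcons /upd /=.
set c := (dstate kind (ckD D ord) w).2 in IH1 IH2 *.
split.
  move=> y; rewrite inE; split.
    case/andP=> Hs /orP [/IH1 [al [c0 [v [E [Hyc [Hv Hp]]]]]] | Hy].
      have [Hcx|Hcx] := boolP (side c0 == side x).
        exists al, c0, (rcons v x); rewrite E rcons_cat rcons_cons all_rcons.
        by split => //; split => //; split => //; rewrite eq_sym Hcx Hv.
      exfalso; move: Hs Hyc Hcx; by case: (side y); case: (side c0); case: (side x).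
    exists w, x, [::]; by rewrite cats1.
  move=> [al [c0 [v [E [Hs [Hv Hp]]]]]].
  case: (rcons_split E) => [[Ev0 [Ec Ew]] | [v' [Ev Ew]]].
    subst; rewrite Hs /=; apply/orP; right; exact: Hp.
  move: Hv; rewrite Ev all_rcons => /andP [/eqP Hx Hv'].
  rewrite Hx Hs /=; apply/orP; left; apply/IH1; by exists al, c0, v'.
have [BR1 BR2] := bad_rcons P w x; split.
  case/andP=> /IH2 Hnb Hx /BR1 [//|/IH1]; by rewrite (negbTE Hx).
move=> H; apply/andP; split.
  by apply/IH2 => Hb; apply: H; apply: BR2; left.
by apply/negP => /IH1 Hi; apply: H; apply: BR2; right.
Qed.

Lemma vpl_wn (S1 S2 : finType) (k1 : S1 -> vkind) (k2 : S2 -> vkind) P1 P2 :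
  VPL k1 P1 -> VPL k2 P2 ->
  VPL (sumkind k1 k2) (fun w => shuffle P1 P2 w /\ well_nested k1 k2 w).
Proof.
move=> [Q1 [G1 [A1 H1]]] [Q2 [G2 [A2 H2]]].
exists (Q1 * Q2)%type, (G1 + G2)%type, (shufA A1 A2) => w; split.
  move=> [[/H1 [q0 [qf [s [Hi [Hf R1]]]]] /H2 [q0' [qf' [s' [Hi' [Hf' R2]]]]]] Hw].
  have W : wnf (sumkind k1 k2) [::] w by apply/wnf_iff.
  have [st' R] := shufA_complete (st := [::]) (stk := [::]) R1 R2 erefl W.
  exists (q0, q0'), (qf, qf'), st'; by rewrite /= Hi Hi' Hf Hf'.
move=> [[q0 q0'] [[qf qf'] [st [/andP [Hi Hi'] [/andP [Hf Hf'] R]]]]].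
have [R1 [R2 W]] := shufA_sound (stk := [::]) R erefl.
split; last by apply/wnf_iff.
split.
  by apply/H1; exists q0, qf, (proj1s st).
by apply/H2; exists q0', qf', (proj2s st).
Qed.

Theorem theorem3p14 (S1 S2 : finType) (k1 : S1 -> vkind) (k2 : S2 -> vkind)
  (P1 : lang S1) (P2 : lang S2) (prec : seq (S1 + S2) -> rel (S1 + S2)) :
  VPL k1 P1 -> wm_lang k1 P1 ->
  VPL k2 P2 -> wm_lang k2 P2 ->
  vp_contextual_order (sumkind k1 k2) prec ->
  (forall w, red prec (shuffle P1 P2) w -> wn k1 k2 (shuffle P1 P2) w) ->
  VPL (sumkind k1 k2) (red prec (shuffle P1 P2)).
Proof.
move=> HV1 _ HV2 _ [Hco [Qd [Gd [D [ord [Hord Hprec]]]]]] Hwn.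
have HM := vpl_wn HV1 HV2.
have [Q [G [A HA]]] := vpl_filter (ckD D ord) (fun c => c.2.2) HM.
exists Q, G, A => w; have [HA1 HA2] := HA w.
have [_ [I1 I2]] := ck_inv D ord (sumkind k1 k2) w.
split.
  move=> Hr; apply: HA1; have [Hs Hw] := Hwn w Hr; split => //.
  apply: I2 => [[al [b [v [a [be [E [Ha [Hv Hp]]]]]]]]].
  apply: (red_notbad Hr); exists al, b, v, a, be; by rewrite Hprec.
move=> /HA2 [[Hs Hw] Hok].
apply: notbad_red => //.
  by move=> u a; have [Hirr _] := Hco u; exact: Hirr.
move=> [al [b [v [a [be [E [Ha [Hv Hp]]]]]]]].
apply: (I1 Hok); exists al, b, v, a, be; by rewrite -Hprec.
Qed.
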